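(* Let $c_0(t)$ be analytic and not identically zero, and define $c_n(t)$, $n\ge1$, by $c_1=\dot c_0$, $c_{n+1}=\dot c_n+\sum_{s=0}^{n-1}c_sc_{n-1-s}$. Let $H_0=1$, $H_n(t)=\det\big(c_{i+k}(t)\big)_{i,k=0}^{n-1}$, and assume $H_n(t)\neq0$ for $1\le n\le N$. For $0\le n\le N$ let $P_n(x;t)$ be the monic polynomial $$P_n(x;t)=\frac{1}{H_n(t)}\det\begin{pmatrix} c_0&c_1&\cdots&c_n\\ c_1&c_2&\cdots&c_{n+1}\\ \vdots&&&\vdots\\ c_{n-1}&c_n&\cdots&c_{2n-1}\\ 1&x&\cdots&x^n\end{pmatrix}$$ (with $P_0=1$), and $h_n=H_{n+1}/H_n$. Suppose the formal series $F(z;t)=\sum_{n\ge0}c_n(t)z^{-n-1}$ equals (as an expansion at $z=\infty$) the rational function $\sum_{k=1}^N A_k(t)/(z-a_k(t))$ with $a_1,\dots,a_N$ pairwise distinct and $A_k$ not identically zero. Then: (i) $\sum_{k=1}^N A_k(t)P_n(a_k(t);t)P_m(a_k(t);t)=h_n(t)\delta_{nm}$ for $0\le n,m\le N$ (with $h_N=0$), where $A_k(t)=-\dot a_k(t)$; (ii) $P_N(x;t)=(x-a_1(t))\cdots(x-a_N(t))$; (iii) $c_n(t)=\sum_{k=1}^NA_ka_k^n=-\sum_{k=1}^N\dot a_ka_k^n$ for all $n\ge0$; (iv) there exist functions $B_0(t),\dots,B_N(t)$, not all zero and not depending on $n$, such that $\sum_{k=0}^NB_k(t)c_{n+k}(t)=0$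 for all $n\ge0$; (v) $H_{N+1}(t)\equiv0$ and $H_N(t)=A_1(t)\cdots A_N(t)\prod_{i<k}(a_i(t)-a_k(t))^2$.
   Context: The recursion for $c_n$ is the Toda-chain moment recursion in the case $u_0=c_0$ (boundary condition $b_{-1}\equiv0$); $c_n$ are the moments of the associated orthogonal polynomials $P_n$, whose Stieltjes function is $F$. A dot denotes $d/dt$. *)

(* Defs.v *)
From HB Require Import structures.
From mathcomp Require Import all_boot all_order all_algebra.
From mathcomp Require Import all_classical all_reals all_analysis.
Set Implicit Arguments. Unset Strict Implicit. Unset Printing Implicit Defensive.
Import Order.TTheory GRing.Theory Num.Theory.
Import numFieldNormedType.Exports.
Local Open Scope ring_scope.

Section Toda.
Variable K : numFieldType.

Definition hankel (c : nat -> K -> K) (n : nat) (t : K) : 'M[K]_n :=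
  \matrix_(i < n, k < n) c (i + k)%N t.

Definition Hdet (c : nat -> K -> K) (n : nat) (t : K) : K := \det (hankel c n t).

Definition Pmat (c : nat -> K -> K) (n : nat) (t : K) : 'M[{poly K}]_n.+1 :=
  \matrix_(i < n.+1, j < n.+1)
    (if (i < n)%N then (c (i + j)%N t)%:P else 'X^j).

Definition Ppoly (c : nat -> K -> K) (n : nat) (t : K) : {poly K} :=
  (Hdet c n t)^-1 *: \det (Pmat c n t).

Definition hnorm (c : nat -> K -> K) (n : nat) (t : K) : K :=
  Hdet c n.+1 t / Hdet c n t.

End Toda.

(* Main.v *)
Require Import Defs.
From HB Require Import structures.
From mathcomp Require Import all_boot all_order all_algebra.
From mathcomp Require Import all_classical all_reals all_analysis.
From mathcomp Require Import ring lra.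
Import Order.TTheory GRing.Theory Num.Theory.
Import numFieldNormedType.Exports.
Local Open Scope ring_scope.

Section Alg.
Variable K : numFieldType.
Variable c : nat -> K -> K.
Variable t : K.

Definition Mr n (r : 'rV[K]_n.+1) : 'M[K]_n.+1 :=
  \matrix_(i < n.+1, j < n.+1) (if (i < n)%N then c (i + j)%N t else r 0 j).

Definition Cof n (j : 'I_n.+1) : K := cofactor (Mr n 0) ord_max j.

Lemma cof_Mr n r j : cofactor (Mr n r) ord_max j = Cof n j.
Proof.
rewrite /Cof /cofactor; congr (_ * \det _); apply/matrixP => i k.
by rewrite !mxE lift_max ltn_ord.
Qed.

Lemma det_Mr n r : \det (Mr n r) = \sum_j r 0 j * Cof n j.
Proof.
rewrite (expand_det_row _ ord_max); apply: eq_bigr => j _.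
by rewrite cof_Mr mxE ltnn.
Qed.

Lemma Pmat_det n : \det (Pmat c n t) = \sum_(j < n.+1) Cof n j *: 'X^j.
Proof.
rewrite (expand_det_row _ ord_max); apply: eq_bigr => j _.
rewrite mxE ltnn mulrC -mul_polyC; congr (_ * _).
rewrite /Cof /cofactor rmorphM /= rmorph_sign -det_map_mx; congr (_ * \det _).
by apply/matrixP => i k; rewrite !mxE lift_max ltn_ord.
Qed.

Lemma Cof_nn n : Cof n ord_max = Hdet c n t.
Proof.
rewrite /Cof /cofactor /Hdet addnn -signr_odd odd_double expr0 mul1r.
by congr (\det _); apply/matrixP => i k; rewrite !mxE !lift_max ltn_ord.
Qed.

Lemma Cof_orth n i : (i < n)%N -> \sum_(j < n.+1) c (i + j)%N t * Cof n j = 0.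
Proof.
move=> lt_in.
transitivity (\det (Mr n (\row_j c (i + j)%N t))).
  by rewrite det_Mr; apply: eq_bigr => j _; rewrite mxE.
have ne : (Ordinal (leqW lt_in) : 'I_n.+1) != ord_max.
  by rewrite -val_eqE /= neq_ltn lt_in.
apply: (determinant_alternate ne) => j.
by rewrite !mxE /= lt_in ltnn.
Qed.

Lemma Mr_hankel n : Mr n (\row_j c (n + j)%N t) = hankel c n.+1 t.
Proof.
apply/matrixP => i j; rewrite !mxE; case: ifP => // /negbT.
rewrite -leqNgt => le; have -> : (i : nat) = n by apply/eqP; rewrite eqn_leq le andbT -ltnS.
by [].
Qed.

Lemma Cof_last n : \sum_(j < n.+1) c (n + j)%N t * Cof n j = Hdet c n.+1 t.
Proof.
by rewrite /Hdet -Mr_hankel det_Mr; apply: eq_bigr => j _; rewrite mxE.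
Qed.

Lemma horner_Ppoly n x :
  (Ppoly c n t).[x] = (Hdet c n t)^-1 * \sum_(j < n.+1) Cof n j * x ^+ j.
Proof.
rewrite /Ppoly Pmat_det hornerZ horner_sum; congr (_ * _).
by apply: eq_bigr => j _; rewrite hornerZ hornerXn.
Qed.

End Alg.
Arguments Cof {K} c t n j.
Arguments Mr {K} c t n r.

Section Key.
Variable K : numFieldType.
Variables (p : {poly K}) (M : nat).
Hypothesis sp : (size p <= M)%N.

Lemma sp1 : (size p <= M.+1)%N.
Proof. exact: leqW. Qed.

Lemma F2 y : \sum_(n < M.+1) p`_n * y ^+ n = p.[y].
Proof. by rewrite (horner_coef_wide _ sp1). Qed.

Lemma F1 y : \sum_(n < M.+1) p`_n * y ^+ n.+1 = y * p.[y].
Proof.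
rewrite -F2 mulr_sumr; apply: eq_bigr => n _; by rewrite exprS mulrCA.
Qed.

Lemma size_deriv_le : (size p^`() <= size p)%N.
Proof.
have [->|pn0] := eqVneq p 0; first by rewrite deriv0.
exact/ltnW/lt_size_deriv.
Qed.

Lemma F3 y : \sum_(n < M.+1) p`_n * (n%:R * y ^+ n.-1) = p^`().[y].
Proof.
rewrite big_ord_recl /= mul0r mulr0 add0r.
rewrite (horner_coef_wide (n := M)); last exact: leq_trans size_deriv_le sp.
apply: eq_bigr => n _; by rewrite coef_deriv /bump /= add1n add0n mulrA mulr_natr.
Qed.

Definition G (n : nat) (y z : K) := \sum_(i < n) y ^+ (n.-1 - i) * z ^+ i.

Lemma G_diag n y : G n y y = n%:R * y ^+ n.-1.
Proof.
rewrite /G.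
transitivity (\sum_(i < n) y ^+ n.-1).
  apply: eq_bigr => i _; rewrite -exprD subnK //.
  by case: n i => [[]//|n] i; rewrite /= -ltnS.
by rewrite sumr_const card_ord mulr_natl.
Qed.

Definition Gp y z := \sum_(n < M.+1) p`_n * G n y z.

Lemma F4 y z : (y - z) * Gp y z = p.[y] - p.[z].
Proof.
rewrite -!F2 -sumrB /Gp mulr_sumr; apply: eq_bigr => n _.
by rewrite /G -mulrBr subrXX mulrCA.
Qed.

Lemma F5 y : Gp y y = p^`().[y].
Proof. by rewrite -F3; apply: eq_bigr => n _; rewrite G_diag. Qed.

End Key.
Arguments G {K} n y z.
Arguments Gp {K} p M y z.
Arguments F1 {K} p M sp y.
Arguments F2 {K} p M sp y.
Arguments F3 {K} p M sp y.
Arguments F4 {K} p M sp y z.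
Arguments F5 {K} p M sp y.

Section Key2.
Variable K : numFieldType.
Variables (N : nat) (w x d e : 'I_N -> K).
Hypothesis xinj : injective x.
Hypothesis H : forall n, \sum_(k < N) w k * x k ^+ n.+1 =
  \sum_(k < N) (e k * x k ^+ n + w k * (n%:R * x k ^+ n.-1 * d k)) +
  \sum_(s < n) (\sum_(j < N) w j * x j ^+ s) * (\sum_(l < N) w l * x l ^+ (n.-1 - s)).

Lemma swap_sum M (f : 'I_M -> 'I_N -> K) (q : 'I_M -> K) :
  \sum_(n < M) q n * \sum_(k < N) f n k = \sum_(k < N) \sum_(n < M) q n * f n k.
Proof.
by under eq_bigr => n _ do rewrite mulr_sumr; rewrite exchange_big.
Qed.

Lemma key k : w k * (d k + w k) = 0.
Proof.
pose R : {poly K} := \prod_(l < N | l != k) ('X - (x l)%:P).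
pose p : {poly K} := ('X - (x k)%:P) * R ^+ 2.
pose M := size p.
have sp : (size p <= M)%N by [].
have Rr : forall j, j != k -> R.[x j] = 0.
  by move=> j jk; rewrite /R horner_prod (bigD1 j) //= hornerXsubC subrr mul0r.
have Rk : R.[x k] != 0.
  rewrite /R horner_prod; apply/prodf_neq0 => l lk.
  by rewrite hornerXsubC subr_eq0; apply/eqP => /xinj /eqP; rewrite eq_sym (negbTE lk).
have pr : forall j, p.[x j] = 0.
  move=> j; rewrite /p hornerM hornerXsubC; have [->|jk] := eqVneq j k.
    by rewrite subrr mul0r.
  by rewrite horner_exp Rr // expr0n mulr0.
have dp : p^`() = R ^+ 2 + ('X - (x k)%:P) * (R^`() * R + R * R^`()).
  by rewrite /p derivM derivXsubC mul1r expr2 derivM.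
have dpr : forall j, j != k -> p^`().[x j] = 0.
  move=> j jk; rewrite dp !hornerE Rr //; ring.
have dpk : p^`().[x k] != 0.
  by rewrite dp !hornerE subrr mul0r addr0 expf_neq0.
have S := congr1 (fun f : nat -> K => \sum_(n < M.+1) p`_n * f n) (funext H).
rewrite /= in S.
have E1 : \sum_(n < M.+1) p`_n * (\sum_(k0 < N) w k0 * x k0 ^+ n.+1) = 0.
  rewrite swap_sum big1 // => j _.
  rewrite (eq_bigr (fun n : 'I_M.+1 => w j * (p`_n * x j ^+ n.+1))); last first.
    by move=> n _; rewrite mulrCA.
  by rewrite -mulr_sumr F1 // pr !mulr0.
have E2 : \sum_(n < M.+1) p`_n *
   (\sum_(k0 < N) (e k0 * x k0 ^+ n + w k0 * (n%:R * x k0 ^+ n.-1 * d k0)))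
   = w k * d k * p^`().[x k].
  rewrite swap_sum (bigD1 k) //= [X in _ + X]big1 ?addr0.
    under eq_bigr => n _ do rewrite mulrDr.
    rewrite big_split /=.
    rewrite (eq_bigr (fun n : 'I_M.+1 => e k * (p`_n * x k ^+ n))); last first.
      by move=> n _; rewrite mulrCA.
    rewrite -mulr_sumr F2 // pr mulr0 add0r.
    rewrite (eq_bigr (fun n : 'I_M.+1 => (w k * d k) * (p`_n * (n%:R * x k ^+ n.-1)))).
      by rewrite -mulr_sumr F3.
    by move=> n _; ring.
  move=> j jk.
  under eq_bigr => n _ do rewrite mulrDr.
  rewrite big_split /=.
  rewrite (eq_bigr (fun n : 'I_M.+1 => e j * (p`_n * x j ^+ n))); last first.
    by move=> n _; rewrite mulrCA.
  rewrite -mulr_sumr F2 // pr mulr0 add0r.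
  rewrite (eq_bigr (fun n : 'I_M.+1 => (w j * d j) * (p`_n * (n%:R * x j ^+ n.-1)))).
    by rewrite -mulr_sumr F3 // dpr // mulr0.
  by move=> n _; ring.
have Teq : forall n, \sum_(s < n) (\sum_(j < N) w j * x j ^+ s) *
    (\sum_(l < N) w l * x l ^+ (n.-1 - s))
    = \sum_(j < N) \sum_(l < N) (w j * w l) * G n (x l) (x j).
  move=> n; under eq_bigr => s _ do rewrite mulr_suml.
  under eq_bigr => s _ do under eq_bigr => j _ do rewrite mulr_sumr.
  rewrite exchange_big /=; apply: eq_bigr => j _.
  rewrite exchange_big /=; apply: eq_bigr => l _.
  rewrite /G mulr_sumr; apply: eq_bigr => s _; ring.
have E3 : \sum_(n < M.+1) p`_n *
   (\sum_(s < n) (\sum_(j < N) w j * x j ^+ s) * (\sum_(l < N) w l * x l ^+ (n.-1 - s)))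
   = w k ^+ 2 * p^`().[x k].
  under eq_bigr => n _ do rewrite Teq.
  rewrite swap_sum.
  under eq_bigr => j _ do rewrite (swap_sum _ (fun n l => w j * w l * G n (x l) (x j))).
  rewrite (bigD1 k) //= [X in _ + X]big1 ?addr0; last first.
    move=> j jk; rewrite (bigD1 j) //= [X in _ + X]big1 ?addr0.
      rewrite (eq_bigr (fun n : 'I_M.+1 => (w j * w j) * (p`_n * G n (x j) (x j)))).
        by rewrite -mulr_sumr -/(Gp p M (x j) (x j)) F5 // dpr // mulr0.
      by move=> n _; rewrite mulrCA.
    move=> l lj.
    rewrite (eq_bigr (fun n : 'I_M.+1 => (w j * w l) * (p`_n * G n (x l) (x j)))).
      rewrite -mulr_sumr -/(Gp p M (x l) (x j)).
      have := F4 p M sp (x l) (x j); rewrite !pr subrr => /eqP; rewrite mulf_eq0.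
      rewrite subr_eq0 (inj_eq xinj) (negbTE lj) /= => /eqP ->.
      by rewrite mulr0.
    by move=> n _; rewrite mulrCA.
  rewrite (bigD1 k) //= [X in _ + X]big1 ?addr0.
    rewrite (eq_bigr (fun n : 'I_M.+1 => (w k * w k) * (p`_n * G n (x k) (x k)))).
      by rewrite -mulr_sumr -/(Gp p M (x k) (x k)) F5 // expr2.
    by move=> n _; rewrite mulrCA.
  move=> l lk.
  rewrite (eq_bigr (fun n : 'I_M.+1 => (w k * w l) * (p`_n * G n (x l) (x k)))).
    rewrite -mulr_sumr -/(Gp p M (x l) (x k)).
    have := F4 p M sp (x l) (x k); rewrite !pr subrr => /eqP; rewrite mulf_eq0.
    rewrite subr_eq0 (inj_eq xinj) (negbTE lk) /= => /eqP ->.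
    by rewrite mulr0.
  by move=> n _; rewrite mulrCA.
move: S; rewrite E1 (eq_bigr (fun n : 'I_M.+1 => p`_n *
   (\sum_(k0 < N) (e k0 * x k0 ^+ n + w k0 * (n%:R * x k0 ^+ n.-1 * d k0))) +
   p`_n * (\sum_(s < n) (\sum_(j < N) w j * x j ^+ s) *
            (\sum_(l < N) w l * x l ^+ (n.-1 - s))))); last first.
  by move=> n _; rewrite mulrDr.
rewrite big_split /= E2 E3 => /eqP.
rewrite eq_sym -mulrDl mulf_eq0 (negbTE dpk) orbF => /eqP <-.
ring.
Qed.
End Key2.

Set Implicit Arguments. Unset Strict Implicit. Unset Printing Implicit Defensive.

Section Mom.
Variable K : numFieldType.
Variable c : nat -> K -> K.
Variable t : K.
Variables (N : nat) (w x : 'I_N -> K).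
Hypothesis mom : forall n, c n t = \sum_(k < N) w k * x k ^+ n.

Lemma mom_bil m n (u : 'I_m -> K) (v : 'I_n -> K) :
  \sum_(k < N) w k * (\sum_(j < n) v j * x k ^+ j) * (\sum_(i < m) u i * x k ^+ i)
  = \sum_(i < m) u i * \sum_(j < n) c (i + j)%N t * v j.
Proof.
under eq_bigr => k _ do rewrite [w k * _]mulr_sumr mulr_suml.
under eq_bigr => k _ do under eq_bigr => j _ do rewrite mulr_sumr.
under [RHS]eq_bigr => i _ do rewrite mulr_sumr.
under [RHS]eq_bigr => i _ do under eq_bigr => j _ do rewrite mom mulr_suml mulr_sumr.
rewrite exchange_big /= [RHS]exchange_big /=.
apply: eq_bigr => j _; rewrite exchange_big /=.
apply: eq_bigr => i _; apply: eq_bigr => k _.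
by rewrite exprD; ring.
Qed.


Lemma ortho_le m n : (m <= n)%N -> Hdet c n t != 0 -> Hdet c m t != 0 ->
  \sum_(k < N) w k * (Ppoly c n t).[x k] * (Ppoly c m t).[x k]
  = if n == m then hnorm c n t else 0.
Proof.
move=> le hn hm.
rewrite (eq_bigr (fun k => ((Hdet c n t)^-1 * (Hdet c m t)^-1) *
   (w k * (\sum_(j < n.+1) Cof c t n j * x k ^+ j) *
     (\sum_(i < m.+1) Cof c t m i * x k ^+ i)))); last first.
  by move=> k _; rewrite !horner_Ppoly; ring.
rewrite -mulr_sumr (mom_bil (fun i => Cof c t m i) (fun j => Cof c t n j)).
have Z : forall i : 'I_m.+1, (i < n)%N ->
    Cof c t m i * \sum_(j < n.+1) c (i + j)%N t * Cof c t n j = 0.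
  by move=> i lt; rewrite Cof_orth ?mulr0.
case: eqVneq => [enm|nnm].
  subst m; rewrite big_ord_recr /= big1 ?add0r; last first.
    by move=> i _; apply: Z; rewrite /= ltn_ord.
  rewrite Cof_nn Cof_last /hnorm; field; exact: hn.
rewrite big1 ?mulr0 // => i _; apply: Z.
by apply: (leq_trans (ltn_ord i)); rewrite ltn_neqAle eq_sym nnm.
Qed.


Definition Qp : {poly K} := \prod_(k < N) ('X - (x k)%:P).

Lemma size_Qp : size Qp = N.+1.
Proof. by rewrite /Qp size_prod_XsubC /index_enum; unlock; rewrite -enumT size_enum_ord. Qed.

Lemma Qp_lead : Qp`_N = 1.
Proof.
have := monic_prod_XsubC (index_enum 'I_N) xpredT x.
by rewrite -/Qp => /monicP; rewrite lead_coefE size_Qp.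
Qed.

Lemma Qp_root k : Qp.[x k] = 0.
Proof.
by rewrite /Qp horner_prod (bigD1 k) //= hornerXsubC subrr mul0r.
Qed.

Lemma Qp_horner y : Qp.[y] = \sum_(j < N.+1) Qp`_j * y ^+ j.
Proof. by rewrite (horner_coef_wide _ (eq_leq size_Qp)). Qed.

Lemma sumQ i : \sum_(j < N.+1) c (i + j)%N t * Qp`_j = 0.
Proof.
under eq_bigr => j _ do rewrite mom mulr_suml.
rewrite exchange_big /= big1 // => k _.
rewrite (eq_bigr (fun j : 'I_N.+1 => (w k * x k ^+ i) * (Qp`_j * x k ^+ j))).
  by rewrite -mulr_sumr -Qp_horner Qp_root mulr0.
by move=> j _; rewrite exprD; ring.
Qed.

Lemma kernel (r : 'rV[K]_N.+1) : \sum_(j < N.+1) r 0 j * Qp`_j = 0 -> \det (Mr c t N r) = 0.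
Proof.
move=> hr; apply/eqP; apply: contraT => hdet.
pose v : 'cV[K]_N.+1 := \col_j Qp`_j.
have Mv : Mr c t N r *m v = 0.
  apply/matrixP => i j; rewrite !mxE.
  under eq_bigr => k _ do rewrite !mxE.
  have [h|h] := boolP (i < N)%N.
    exact: sumQ.
  exact: hr.
have U : Mr c t N r \in unitmx by rewrite unitmxE unitfE.
have := mulKmx U v; rewrite Mv mulmx0 => /matrixP /(_ ord_max 0).
rewrite !mxE Qp_lead => /eqP; by rewrite eq_sym oner_eq0.
Qed.

Lemma HN1 : Hdet c N.+1 t = 0.
Proof.
rewrite /Hdet -Mr_hankel; apply: kernel.
by under eq_bigr => j _ do rewrite mxE; exact: sumQ.
Qed.


Lemma Qp_sum : Qp = \sum_(j < N.+1) Qp`_j *: 'X^j.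
Proof. by rewrite -poly_def -size_Qp coefK. Qed.

Lemma Ppoly_sum n : Ppoly c n t =
  \sum_(j < n.+1) ((Hdet c n t)^-1 * Cof c t n j) *: 'X^j.
Proof.
rewrite /Ppoly Pmat_det scaler_sumr; apply: eq_bigr => j _; by rewrite scalerA.
Qed.

Lemma PN_root k : (Ppoly c N t).[x k] = 0.
Proof.
rewrite horner_Ppoly.
rewrite (_ : \sum_(j < N.+1) Cof c t N j * x k ^+ j = \det (Mr c t N (\row_j x k ^+ j))).
  rewrite kernel ?mulr0 //.
  rewrite (eq_bigr (fun j : 'I_N.+1 => Qp`_j * x k ^+ j)) -?Qp_horner ?Qp_root //.
  by move=> j _; rewrite mxE mulrC.
by rewrite det_Mr; apply: eq_bigr => j _; rewrite mxE mulrC.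
Qed.

Lemma PN : Hdet c N t != 0 -> injective x -> Ppoly c N t = Qp.
Proof.
move=> hN xinj; apply/eqP; rewrite -subr_eq0; apply/eqP.
set d := _ - _.
have dE : d = \poly_(j < N) ((Hdet c N t)^-1 * Cof c t N (inord j)
                         - Qp`_j).
  rewrite /d Ppoly_sum {1}Qp_sum -sumrB big_ord_recr /= Cof_nn Qp_lead mulVf //.
  rewrite subrr addr0 poly_def; apply: eq_bigr => j _.
  rewrite scalerBl (_ : inord j = widen_ord (leqnSn N) j) //.
  by apply/val_inj; rewrite /= inordK // (leq_trans (ltn_ord j)).
apply/eqP; apply: contraT => dn0.
have := max_poly_roots dn0 (rs := map x (enum 'I_N)).
rewrite size_map size_enum_ord map_inj_uniq // enum_uniq.
have -> : all (root d) (map x (enum 'I_N)).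
  apply/allP => y /mapP [k _ ->]; rewrite /root /d hornerD hornerN PN_root Qp_root.
  by rewrite subrr.
move=> /(_ isT isT); rewrite dE => /leq_trans /(_ (size_poly _ _)).
by rewrite ltnn.
Qed.

Lemma HN_formula : Hdet c N t =
  (\prod_(k < N) w k) * \prod_(i < N) \prod_(k < N | (i < k)%N) (x i - x k) ^+ 2.
Proof.
rewrite /Hdet.
pose V := Vandermonde N (\row_k x k).
have -> : hankel c N t = V *m diag_mx (\row_k w k) *m V^T.
  apply/matrixP => i j; rewrite !mxE mom; apply: eq_bigr => k _.
  by rewrite mul_mx_diag !mxE exprD; ring.
rewrite !det_mulmx det_tr det_diag det_Vandermonde.
have E : \prod_(i < N) \prod_(k < N | (i < k)%N) (x i - x k) ^+ 2
    = (\prod_(i < N) \prod_(k < N | (i < k)%N) (x k - x i)) ^+ 2.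
  rewrite -prodrXl; apply: eq_bigr => i _; rewrite -prodrXl.
  by apply: eq_bigr => k _; rewrite -opprB sqrrN.
have EP : \prod_(i < N) \prod_(j < N | (i < j)%N)
    ((\row_k x k) 0 j - (\row_k x k) 0 i)
  = \prod_(i < N) \prod_(k < N | (i < k)%N) (x k - x i).
  by apply: eq_bigr => i _; apply: eq_bigr => k _; rewrite !mxE.
have EW : \prod_i (\row_k w k) 0 i = \prod_(k < N) w k.
  by apply: eq_bigr => i _; rewrite !mxE.
by rewrite E EP EW expr2; ring.
Qed.

End Mom.

Local Open Scope classical_set_scope.
Local Open Scope ring_scope.

Lemma deriv_c (K : numFieldType) (D : set K) (N : nat)
  (c : nat -> K -> K) (A a : 'I_N -> K -> K) n t :
  open D -> D t ->
  (forall k t, D t -> derivable (a k) t 1) ->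
  (forall k t, D t -> derivable (A k) t 1) ->
  (forall n t, D t -> c n t = \sum_(k < N) A k t * a k t ^+ n) ->
  derive1 (c n) t = \sum_(k < N) (derive1 (A k) t * a k t ^+ n +
      A k t * (n%:R * a k t ^+ n.-1 * derive1 (a k) t)).
Proof.
move=> oD Dt da dA mom.
have nD : \forall s \near t, D s by apply: open_nbhs_nbhs; split.
rewrite derive1E (@near_eq_derive _ _ _ _ (\sum_(k < N) (A k * a k ^+ n))).
  rewrite derive_sum; last first.
    by move=> k; apply: derivableM; [exact: dA | exact/derivableX/da].
  apply: eq_bigr => k _.
  rewrite deriveM; [|exact: dA|exact/derivableX/da].
  rewrite deriveX; last exact: da.
  rewrite -!derive1E /= exprfctE.
  rewrite /GRing.scale /=; ring.
near=> s; rewrite fct_sumE mom; last by near: s.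
by apply: eq_bigr => k _; rewrite /= exprfctE.
Unshelve. all: by end_near.
Qed.

Theorem mainTheorem4 (K : numFieldType) (D : set K) (N : nat)
  (c : nat -> K -> K) (A a : 'I_N -> K -> K) :
  open D ->
  (forall n t, D t -> derivable (c n) t 1) ->
  (exists t, D t /\ c 0%N t != 0) ->
  (forall n t, D t ->
     c n.+1 t = derive1 (c n) t + \sum_(s < n) c s t * c (n.-1 - s)%N t) ->
  (forall n t, D t -> (1 <= n <= N)%N -> Hdet c n t != 0) ->
  (forall k t, D t -> derivable (a k) t 1) ->
  (forall k t, D t -> derivable (A k) t 1) ->
  (forall t, D t -> injective (fun k => a k t)) ->
  (forall k, exists t, D t /\ A k t != 0) ->
  (forall n t, D t -> c n t = \sum_(k < N) A k t * a k t ^+ n) ->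
  (forall t, D t ->
     (forall k, A k t = - derive1 (a k) t) /\
     (forall n m, (n <= N)%N -> (m <= N)%N ->
        \sum_(k < N) A k t * (Ppoly c n t).[a k t] * (Ppoly c m t).[a k t]
        = (if n == m then hnorm c n t else 0)) /\
     hnorm c N t = 0) /\
  (forall t, D t -> Ppoly c N t = \prod_(k < N) ('X - (a k t)%:P)) /\
  (forall n t, D t ->
     c n t = \sum_(k < N) A k t * a k t ^+ n /\
     c n t = - \sum_(k < N) derive1 (a k) t * a k t ^+ n) /\
  (exists B : 'I_N.+1 -> K -> K,
     (exists k t, D t /\ B k t != 0) /\
     (forall n t, D t -> \sum_(k < N.+1) B k t * c (n + k)%N t = 0)) /\
  (forall t, D t ->
     Hdet c N.+1 t = 0 /\
     Hdet c N t = (\prod_(k < N) A k t) *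
        \prod_(i < N) \prod_(k < N | (i < k)%N) (a i t - a k t) ^+ 2).
Proof.
move=> oD dc [t0 [Dt0 c0t0]] rec Hn da dA ainj Anz mom.
have momt : forall t, D t -> forall n, c n t = \sum_(k < N) A k t * a k t ^+ n.
  by move=> t Dt n; exact: mom.
have N0 : (0 < N)%N.
  rewrite lt0n; apply/negP => /eqP N0; move: c0t0; rewrite mom // big1 ?eqxx //.
  by move=> [i Hi]; exfalso; move: Hi; rewrite N0.
have hdet : forall n t, D t -> (n <= N)%N -> Hdet c n t != 0.
  move=> [|n] t Dt le; last by apply: Hn.
  by rewrite /Hdet det_mx00 oner_eq0.
have hN : forall t, D t -> Hdet c N t != 0 by move=> t Dt; exact: hdet.
have Ader : forall t k, D t -> A k t = - derive1 (a k) t.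
  move=> t k Dt.
  have Ak : A k t != 0.
    apply: contraNneq (hN t Dt) => Ak0.
    by rewrite (HN_formula (momt t Dt)) (bigD1 k) //= Ak0 !mul0r.
  have Hk : forall n, \sum_(k < N) A k t * a k t ^+ n.+1 =
    \sum_(k < N) (derive1 (A k) t * a k t ^+ n +
       A k t * (n%:R * a k t ^+ n.-1 * derive1 (a k) t)) +
    \sum_(s < n) (\sum_(j < N) A j t * a j t ^+ s) *
       (\sum_(l < N) A l t * a l t ^+ (n.-1 - s)).
    move=> n; rewrite -mom // rec // (@deriv_c _ _ _ _ _ _ n t oD Dt da dA mom).
    by congr (_ + _); apply: eq_bigr => s _; rewrite !mom.
  have := @key K N (fun k => A k t) (fun k => a k t) (fun k => derive1 (a k) t)
     (fun k => derive1 (A k) t) (ainj t Dt) Hk k.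
  move=> /eqP; rewrite mulf_eq0 (negbTE Ak) /= => /eqP H0.
  by apply/eqP; rewrite -addr_eq0 addrC H0.
split.
  move=> t Dt; split; first by move=> k; apply: Ader.
  split; last by rewrite /hnorm (HN1 (momt t Dt)) mul0r.
  move=> n m nN mN; have [le|lt] := leqP m n.
    by apply: (ortho_le (momt t Dt)) => //; apply: hdet.
  rewrite (eq_bigr (fun k => A k t * (Ppoly c m t).[a k t] * (Ppoly c n t).[a k t])).
    rewrite (ortho_le (momt t Dt) (ltnW lt)) ?hdet //.
    by rewrite (gtn_eqF lt) (ltn_eqF lt).
  by move=> k _; rewrite mulrAC.
split; first by move=> t Dt; exact: (PN (momt t Dt) (hN t Dt) (ainj t Dt)).
split.
  move=> n t Dt; split; first exact: mom.
  rewrite mom // -sumrN; apply: eq_bigr => k _; by rewrite (Ader t k Dt) mulNr.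
split.
  exists (fun k t => (Qp (fun k => a k t))`_k); split.
    by exists ord_max, t0; split => //; rewrite /= Qp_lead oner_eq0.
  move=> n t Dt; rewrite (eq_bigr (fun k : 'I_N.+1 => c (n + k)%N t * (Qp (fun k => a k t))`_k)).
    exact: (sumQ (momt t Dt) n).
  by move=> k _; rewrite mulrC.
move=> t Dt; split; first exact: (HN1 (momt t Dt)).
exact: (HN_formula (momt t Dt)).
Qed.
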